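(* (Provably in $\mathsf{Z}^-_{\mathrm{FTM}\omega}$.) For any set $X$ there is a digraph $A\subseteq\omega\times\omega$ which is well-founded, extensional and vertex, such that $X=\eta_A(\mathrm{ver}(A))$.
   Context: $\mathsf{Z}^-_{\mathrm{FTM}\omega}$ is Zermelo set theory without Power Set and Choice (Extensionality, Pairing, Union, Infinity, Regularity, Separation) plus: (FC) every set $X$ has a superset $Y$ containing all finite subsets of $Y$; (TS) every set has a transitive superset; (MC) every set binary relation (digraph) $A$ that is well-founded (every nonempty subset of $\mathrm{fld}(A)=\mathrm{dom}A\cup\mathrm{ran}A$ has an element $a$ with no element $j$ of the subset satisfying $jAa$) and extensional (for $u,v\in\mathrm{fld}(A)$, $\{j:jAu\}=\{j:jAv\}$ implies $u=v$) admits a transitive set $X$ and a bijection $\eta:\mathrm{fld}(A)\to X$ with $jAk\iff\eta(j)\in\eta(k)$ (this $\eta$ is unique and denoted $\eta_A$); (Count) every set admits an injection into $\omega$. A digraph $A$ is vertex if $A=\emptyset$ or there is a unique $v=\mathrm{ver}(A)\in\mathrm{fld}(A)$ such that every $j\in\mathrm{fld}(A)$ is connected to $v$ by a finite chain $j=j_0Aj_1A\cdots Aj_K=v$ ($K\ge0$). *)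

(* Defs.v *)
(* We formalize "provable in Z^-_FTMw" as "true in every
   (first-order) model of Z^-_FTMw".  A model is a type with a binary
   membership relation satisfying the axioms; Separation is the first-order
   schema, stated over a deep embedding of formulas of the language {in,=}. *)

Inductive form : Type :=
  | FMem : nat -> nat -> form          (* de Bruijn: x_i in x_j *)
  | FEq  : nat -> nat -> form
  | FBot : form
  | FImp : form -> form -> form
  | FAll : form -> form.

Definition scons {V : Type} (x : V) (e : nat -> V) : nat -> V :=
  fun n => match n with 0 => x | S k => e k end.

Fixpoint sat {V : Type} (mem : V -> V -> Prop) (e : nat -> V) (phi : form) : Prop :=
  match phi with
  | FMem i j => mem (e i) (e j)
  | FEq i j => e i = e j
  | FBot => False
  | FImp p q => sat mem e p -> sat mem e q
  | FAll p => forall x : V, sat mem (scons x e) p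
  end.

Section SetNotions.
Variable V : Type.
Variable mem : V -> V -> Prop.

Definition empty (e : V) : Prop := forall x, ~ mem x e.
Definition subset (a b : V) : Prop := forall x, mem x a -> mem x b.
Definition is_upair (c a b : V) : Prop := forall z, mem z c <-> (z = a \/ z = b).
Definition is_opair (p a b : V) : Prop :=
  exists u v, is_upair u a a /\ is_upair v a b /\ is_upair p u v.
Definition is_succ (s x : V) : Prop := forall z, mem z s <-> (mem z x \/ z = x).
Definition inductive (I : V) : Prop :=
  (exists e, empty e /\ mem e I) /\
  (forall x, mem x I -> exists s, is_succ s x /\ mem s I).
Definition is_omega (w : V) : Prop :=
  inductive w /\ forall I, inductive I -> subset w I.
Definition transitive (t : V) : Prop := forall x y, mem x y -> mem y t -> mem x t.

Definition rel (A j k : V) : Prop := exists p, mem p A /\ is_opair p j k.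
Definition in_fld (A x : V) : Prop := exists y, rel A x y \/ rel A y x.
Definition is_digraph (A : V) : Prop :=
  forall p, mem p A -> exists a b, is_opair p a b.
Definition wf_dg (A : V) : Prop :=
  forall S, (exists x, mem x S) -> (forall x, mem x S -> in_fld A x) ->
    exists a, mem a S /\ forall j, mem j S -> ~ rel A j a.
Definition ext_dg (A : V) : Prop :=
  forall u v, in_fld A u -> in_fld A v ->
    (forall j, rel A j u <-> rel A j v) -> u = v.

Definition app (f a b : V) : Prop := exists p, mem p f /\ is_opair p a b.
Definition is_func (f : V) : Prop :=
  (forall p, mem p f -> exists a b, is_opair p a b) /\
  (forall a b c, app f a b -> app f a c -> b = c).
Definition dom_is (f : V) (P : V -> Prop) : Prop :=
  forall a, P a <-> exists b, app f a b.
Definition ran_is (f : V) (P : V -> Prop) : Prop :=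
  forall b, P b <-> exists a, app f a b.
Definition inj (f : V) : Prop := forall a a' b, app f a b -> app f a' b -> a = a'.

Definition iso_onto (f A X : V) : Prop :=
  is_func f /\ dom_is f (in_fld A) /\ ran_is f (fun y => mem y X) /\ inj f /\
  (forall j k a b, app f j a -> app f k b -> (rel A j k <-> mem a b)).
Definition is_collapse (A f : V) : Prop :=
  exists X, transitive X /\ iso_onto f A X.

Definition finite_set (z : V) : Prop :=
  exists w n f, is_omega w /\ mem n w /\ is_func f /\
    dom_is f (fun i => mem i n) /\ ran_is f (fun y => mem y z) /\ inj f.

(* j = j_0 A j_1 A ... A j_K = v, an (internally) finite chain indexed by
   K+1 = {0,...,K}, K in omega *)
Definition chain (A j v : V) : Prop :=
  exists w K s c e, is_omega w /\ mem K w /\ is_succ s K /\ is_func c /\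
    dom_is c (fun i => mem i s) /\ empty e /\ app c e j /\ app c K v /\
    (forall i si ci csi, mem i K -> is_succ si i -> app c i ci -> app c si csi ->
       rel A ci csi).

Definition is_ver (A v : V) : Prop :=
  in_fld A v /\ forall j, in_fld A j -> chain A j v.
Definition vertex (A : V) : Prop :=
  empty A \/ exists v, is_ver A v /\ forall u, is_ver A u -> u = v.

Definition sub_omega2 (A w : V) : Prop :=
  forall p, mem p A -> exists m n, mem m w /\ mem n w /\ is_opair p m n.

(* X = eta_A(ver(A)); for A = empty we use the convention eta_A(ver A) = empty *)
Definition denotes (A X : V) : Prop :=
  (empty A /\ empty X) \/
  (exists v f, is_ver A v /\ is_collapse A f /\ app f v X).

End SetNotions.

Arguments empty {V}. Arguments subset {V}. Arguments is_upair {V}. Arguments is_opair {V}.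
Arguments is_succ {V}. Arguments inductive {V}. Arguments is_omega {V}. Arguments transitive {V}.
Arguments rel {V}. Arguments in_fld {V}. Arguments is_digraph {V}. Arguments wf_dg {V}. Arguments ext_dg {V}.
Arguments app {V}. Arguments is_func {V}. Arguments dom_is {V}. Arguments ran_is {V}. Arguments inj {V}.
Arguments iso_onto {V}. Arguments is_collapse {V}. Arguments finite_set {V}. Arguments chain {V}.
Arguments is_ver {V}. Arguments vertex {V}. Arguments sub_omega2 {V}. Arguments denotes {V}.

Record ZFTM : Type := {
  zV : Type;
  zmem : zV -> zV -> Prop;
  ax_ext : forall a b, (forall x, zmem x a <-> zmem x b) -> a = b;
  ax_pair : forall a b, exists c, is_upair zmem c a b;
  ax_union : forall a, exists u, forall z, zmem z u <-> exists y, zmem y a /\ zmem z y;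
  ax_inf : exists I, inductive zmem I;
  ax_reg : forall a, (exists x, zmem x a) ->
             exists x, zmem x a /\ forall y, zmem y x -> ~ zmem y a;
  ax_sep : forall (phi : form) (e : nat -> zV) (a : zV),
             exists b, forall x, zmem x b <-> (zmem x a /\ sat zmem (scons x e) phi);
  ax_FC : forall x, exists y, subset zmem x y /\
             forall z, finite_set zmem z -> subset zmem z y -> zmem z y;
  ax_TS : forall x, exists t, transitive zmem t /\ subset zmem x t;
  ax_MC : forall A, is_digraph zmem A -> wf_dg zmem A -> ext_dg zmem A ->
             exists X f, transitive zmem X /\ iso_onto zmem f A X;
  ax_count : forall x, exists w f, is_omega zmem w /\ is_func zmem f /\
             dom_is zmem f (fun a => zmem a x) /\
             (forall a b, app zmem f a b -> zmem b w) /\ inj zmem f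
}.

(* Main.v *)
Require Import Defs.
From Stdlib Require Import Classical ClassicalEpsilon Setoid Morphisms.

Definition fNot p := FImp p FBot.
Definition fOr p q := FImp (fNot p) q.
Definition fAnd p q := fNot (FImp p (fNot q)).
Definition fEx p := fNot (FAll (fNot p)).
Definition fIff p q := fAnd (FImp p q) (FImp q p).
Definition fupair c a b := FAll (fIff (FMem 0 (S c)) (fOr (FEq 0 (S a)) (FEq 0 (S b)))).
Definition fopair p a b := fEx (fEx (fAnd (fupair 1 (S (S a)) (S (S a)))
   (fAnd (fupair 0 (S (S a)) (S (S b))) (fupair (S (S p)) 1 0)))).
Definition fapp f a b := fEx (fAnd (FMem 0 (S f)) (fopair 0 (S a) (S b))).
Definition fsucc s x := FAll (fIff (FMem 0 (S s)) (fOr (FMem 0 (S x)) (FEq 0 (S x)))).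
Definition ftrans t := FAll (FAll (FImp (FMem 1 0) (FImp (FMem 0 (S (S t))) (FMem 1 (S (S t)))))).
Definition fsub a b := FAll (FImp (FMem 0 (S a)) (FMem 0 (S b))).
Definition ffunc c := fAnd (FAll (FImp (FMem 0 (S c)) (fEx (fEx (fopair 2 1 0)))))
  (FAll (FAll (FAll (FImp (fapp (S(S(S c))) 2 1) (FImp (fapp (S(S(S c))) 2 0) (FEq 1 0)))))).
Definition fdom c s := FAll (fIff (FMem 0 (S s)) (fEx (fapp (S (S c)) 1 0))).

Section Forms.
Variable V : Type.
Variable mem : V -> V -> Prop.

Lemma sat_not e p : sat mem e (fNot p) <-> ~ sat mem e p.
Proof. reflexivity. Qed.
Lemma sat_or e p q : sat mem e (fOr p q) <-> sat mem e p \/ sat mem e q.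
Proof. simpl. tauto. Qed.
Lemma sat_and e p q : sat mem e (fAnd p q) <-> sat mem e p /\ sat mem e q.
Proof. simpl. tauto. Qed.
Lemma sat_ex e p : sat mem e (fEx p) <-> exists x, sat mem (scons x e) p.
Proof. simpl. split. intro H. apply NNPP. intro H'. apply H. intros x Hx. apply H'. eauto.
  intros [x Hx] H. eapply H; eauto. Qed.
Lemma sat_iff e p q : sat mem e (fIff p q) <-> (sat mem e p <-> sat mem e q).
Proof. unfold fIff. rewrite sat_and. simpl. tauto. Qed.
Lemma sat_all e p : sat mem e (FAll p) <-> forall x, sat mem (scons x e) p.
Proof. reflexivity. Qed.
Lemma sat_imp e p q : sat mem e (FImp p q) <-> (sat mem e p -> sat mem e q).
Proof. reflexivity. Qed.
Lemma sat_mem e i j : sat mem e (FMem i j) <-> mem (e i) (e j).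
Proof. reflexivity. Qed.
Lemma sat_eq e i j : sat mem e (FEq i j) <-> e i = e j.
Proof. reflexivity. Qed.
End Forms.

Ltac sat0 := first [ progress cbn [sat scons] | setoid_rewrite sat_iff | setoid_rewrite sat_ex | setoid_rewrite sat_and
  | setoid_rewrite sat_or | setoid_rewrite sat_not ].

Section Forms2.
Variable V : Type.
Variable mem : V -> V -> Prop.

Lemma sat_upair e c a b : sat mem e (fupair c a b) <-> is_upair mem (e c) (e a) (e b).
Proof. unfold fupair, is_upair. repeat sat0; cbn [scons]. reflexivity. Qed.
Lemma sat_opair e p a b : sat mem e (fopair p a b) <-> is_opair mem (e p) (e a) (e b).
Proof. unfold fopair, is_opair. repeat (first [setoid_rewrite sat_upair | sat0]); cbn [scons]. reflexivity. Qed.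
Lemma sat_app e f a b : sat mem e (fapp f a b) <-> app mem (e f) (e a) (e b).
Proof. unfold fapp, app. repeat (first [setoid_rewrite sat_opair | sat0]); cbn [scons]. reflexivity. Qed.
Lemma sat_rel e f a b : sat mem e (fapp f a b) <-> rel mem (e f) (e a) (e b).
Proof. apply sat_app. Qed.
Lemma sat_succ e s x : sat mem e (fsucc s x) <-> is_succ mem (e s) (e x).
Proof. unfold fsucc, is_succ. repeat sat0; cbn [scons]. reflexivity. Qed.
Lemma sat_trans e t : sat mem e (ftrans t) <-> Defs.transitive mem (e t).
Proof. reflexivity. Qed.
Lemma sat_sub e a b : sat mem e (fsub a b) <-> subset mem (e a) (e b).
Proof. reflexivity. Qed.
Lemma sat_func e c : sat mem e (ffunc c) <-> is_func mem (e c).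
Proof. unfold ffunc, is_func. repeat (first [setoid_rewrite sat_app | setoid_rewrite sat_opair | sat0]); cbn [scons]. reflexivity. Qed.
Lemma sat_dom e c s : sat mem e (fdom c s) <-> dom_is mem (e c) (fun a => mem a (e s)).
Proof. unfold fdom, dom_is. repeat (first [setoid_rewrite sat_app | sat0]); cbn [scons]. reflexivity. Qed.
End Forms2.

Ltac sat_simp := repeat (first [setoid_rewrite sat_func | setoid_rewrite sat_dom |
  setoid_rewrite sat_app | setoid_rewrite sat_opair | setoid_rewrite sat_upair
  | setoid_rewrite sat_succ | setoid_rewrite sat_trans | setoid_rewrite sat_sub | sat0]); cbn [scons].
From Stdlib Require Import Classical ClassicalEpsilon Setoid Morphisms.

Section Main.
Variable M : ZFTM.
Notation V := (zV M).
Notation mem := (zmem M).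
Notation "x ∈ y" := (zmem M x y) (at level 70).

Lemma ext (a b : V) : (forall x, x ∈ a <-> x ∈ b) -> a = b.
Proof. exact (ax_ext M a b). Qed.

Definition up (a b : V) : V := proj1_sig (constructive_indefinite_description _ (ax_pair M a b)).
Lemma up_spec a b z : z ∈ up a b <-> z = a \/ z = b.
Proof. unfold up. destruct (constructive_indefinite_description _ _) as [c Hc]. apply Hc. Qed.
Lemma upair_eq c a b : is_upair mem c a b <-> c = up a b.
Proof. split. intro H. apply ext. intro z. rewrite up_spec. apply H. intros ->. intro z. apply up_spec. Qed.
Lemma up_l a b : a ∈ up a b.
Proof. apply up_spec. auto. Qed.
Lemma up_r a b : b ∈ up a b.
Proof. apply up_spec. auto. Qed.
Lemma sing_spec a z : z ∈ up a a <-> z = a.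
Proof. rewrite up_spec. tauto. Qed.

Definition op a b := up (up a a) (up a b).
Lemma opair_eq p a b : is_opair mem p a b <-> p = op a b.
Proof. unfold is_opair. split. intros (u&v&Hu&Hv&Hp). apply upair_eq in Hu, Hv, Hp. subst. reflexivity.
 intros ->. exists (up a a), (up a b). rewrite !upair_eq. auto. Qed.

Lemma op_inj a b c d : op a b = op c d -> a = c /\ b = d.
Proof.
 intro H.
 assert (Hac: a = c).
 { assert (H0 : up a a ∈ op c d) by (rewrite <- H; apply up_l).
   unfold op in H0; rewrite up_spec in H0. destruct H0 as [E|E].
   - assert (H1 : a ∈ up c c) by (rewrite <- E; apply up_l). apply sing_spec in H1; auto.
   - assert (H1 : c ∈ up a a) by (rewrite E; apply up_l). apply sing_spec in H1; auto. }
 subst c. split; auto.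
 assert (Hv: up a b ∈ op a d) by (rewrite <- H; apply up_r).
 assert (Hw: up a d ∈ op a b) by (rewrite H; apply up_r).
 unfold op in Hv, Hw. rewrite up_spec in Hv, Hw.
 destruct Hv as [E|E].
 - assert (Hb : b ∈ up a a) by (rewrite <- E; apply up_r). apply sing_spec in Hb. subst b.
   assert (Hd : d ∈ up a a) by (destruct Hw as [E'|E']; rewrite <- E'; apply up_r).
   apply sing_spec in Hd. auto.
 - assert (Hb : b ∈ up a d) by (rewrite <- E; apply up_r). apply up_spec in Hb.
   destruct Hb as [Hb|Hb]; auto. subst b.
   assert (Hd : d ∈ up a a) by (rewrite E; apply up_r). apply sing_spec in Hd. auto.
Qed.

Definition uni (a : V) : V := proj1_sig (constructive_indefinite_description _ (ax_union M a)).
Lemma uni_spec a z : z ∈ uni a <-> exists y, y ∈ a /\ z ∈ y.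
Proof. unfold uni. destruct (constructive_indefinite_description _ _) as [c Hc]. apply Hc. Qed.
Definition cup a b := uni (up a b).
Lemma cup_spec a b z : z ∈ cup a b <-> z ∈ a \/ z ∈ b.
Proof. unfold cup. rewrite uni_spec. split.
  intros (y&Hy&Hz). apply up_spec in Hy. destruct Hy; subst; auto.
  intros [H|H]; [exists a | exists b]; split; auto using up_l, up_r. Qed.
Definition suc x := cup x (up x x).
Lemma suc_spec x z : z ∈ suc x <-> z ∈ x \/ z = x.
Proof. unfold suc. rewrite cup_spec, sing_spec. tauto. Qed.
Lemma succ_eq s x : is_succ mem s x <-> s = suc x.
Proof. split. intro H. apply ext. intro z. rewrite suc_spec. apply H. intros ->. intro z. apply suc_spec. Qed.
Lemma suc_self x : x ∈ suc x.
Proof. apply suc_spec. auto. Qed.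

Definition I0 : V := proj1_sig (constructive_indefinite_description _ (ax_inf M)).
Lemma om_ex : exists w : V, is_omega mem w.
Proof. destruct (ax_count M I0) as (w&f&H&_). eauto. Qed.
Definition om : V := proj1_sig (constructive_indefinite_description _ om_ex).
Lemma om_spec : is_omega mem om.
Proof. unfold om. destruct (constructive_indefinite_description _ _) as [c Hc]. apply Hc. Qed.
Definition emp : V := proj1_sig (constructive_indefinite_description _ (proj1 (proj1 om_spec))).
Lemma emp_spec' : empty mem emp /\ emp ∈ om.
Proof. unfold emp. destruct (constructive_indefinite_description _ _) as [c Hc]. apply Hc. Qed.
Lemma emp_spec x : ~ x ∈ emp.
Proof. apply emp_spec'. Qed.
Lemma emp_om : emp ∈ om.
Proof. apply emp_spec'. Qed.
Lemma empty_eq e : empty mem e <-> e = emp.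
Proof. split. intro H. apply ext. intro x. split; intro Hx. destruct (H x Hx). destruct (emp_spec x Hx).
  intros ->. intro x. apply emp_spec. Qed.
Lemma om_suc n : n ∈ om -> suc n ∈ om.
Proof. intro H. destruct (proj2 (proj1 om_spec) n H) as (s&Hs&Hs'). apply succ_eq in Hs. subst; auto. Qed.
Lemma omega_eq w : is_omega mem w -> w = om.
Proof. intro H. apply ext. intro x. split; intro Hx. apply (proj2 H om (proj1 om_spec)); auto.
  apply (proj2 om_spec w (proj1 H)); auto. Qed.

Lemma app_eq f a b : app mem f a b <-> op a b ∈ f.
Proof. unfold app. split. intros (p&Hp&Ho). apply opair_eq in Ho. subst; auto.
  intro H. exists (op a b). rewrite opair_eq. auto. Qed.
Lemma rel_eq f a b : rel mem f a b <-> op a b ∈ f.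
Proof. apply app_eq. Qed.

Lemma no_self x : ~ x ∈ x.
Proof. intro H. destruct (ax_reg M (up x x)) as (y&Hy&Hm). exists x; apply up_l.
  apply sing_spec in Hy. subst y. apply (Hm x H). apply up_l. Qed.
Lemma no2 x y : x ∈ y -> y ∈ x -> False.
Proof. intros H1 H2. destruct (ax_reg M (up x y)) as (m&Hm&Hmin). exists x; apply up_l.
  apply up_spec in Hm. destruct Hm; subst. apply (Hmin y H2). apply up_r. apply (Hmin x H1). apply up_l. Qed.
Lemma suc_inj a b : suc a = suc b -> a = b.
Proof. intro H. destruct (classic (a = b)) as [|Hn]; auto. exfalso.
  assert (Ha : a ∈ suc b) by (rewrite <- H; apply suc_self).
  assert (Hb : b ∈ suc a) by (rewrite H; apply suc_self).
  apply suc_spec in Ha, Hb. destruct Ha as [Ha|]; [|congruence]. destruct Hb as [Hb|]; [|congruence].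
  eauto using no2. Qed.
Lemma suc_ne_emp a : suc a <> emp.
Proof. intro H. apply (emp_spec a). rewrite <- H. apply suc_self. Qed.

Lemma sep phi e a : exists b, forall x, x ∈ b <-> x ∈ a /\ sat mem (scons x e) phi.
Proof. apply ax_sep. Qed.

Lemma eps_ind phi e a : (forall z, z ∈ a -> (forall y, y ∈ z -> y ∈ a -> sat mem (scons y e) phi) -> sat mem (scons z e) phi) -> forall z, z ∈ a -> sat mem (scons z e) phi.
Proof. intros H z Hz. apply NNPP; intro Hn. destruct (sep (fNot phi) e a) as [b Hb].
  destruct (ax_reg M b) as [m [Hm Hmin]]. exists z; apply Hb; split; auto.
  apply Hb in Hm as [Hma Hmn]. apply Hmn. apply H; auto. intros y Hy Hya. apply NNPP; intro Hyn.
  apply (Hmin y Hy). apply Hb. split; auto. Qed.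

Lemma om_ind phi e : sat mem (scons emp e) phi -> (forall n, n ∈ om -> sat mem (scons n e) phi -> sat mem (scons (suc n) e) phi) -> forall n, n ∈ om -> sat mem (scons n e) phi.
Proof. intros H0 HS. destruct (sep phi e om) as [b Hb].
  assert (Hi : inductive mem b).
  { split. exists emp. split. apply empty_eq; auto. apply Hb; split; auto using emp_om.
    intros x Hx. apply Hb in Hx as [Hx1 Hx2]. exists (suc x). split. apply succ_eq; auto.
    apply Hb. split; auto using om_suc. }
  intros n Hn. apply (proj2 om_spec b Hi) in Hn. apply Hb in Hn. tauto. Qed.

Definition Fb := FAll (FImp (fsucc 0 1) (FAll (fIff (FMem 0 1) (fOr (FEq 0 3) (fEx (fAnd (FMem 0 3) (fAnd (FMem 0 5) (fsucc 1 0)))))))).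
Lemma sat_Fb n E : sat mem (scons n (scons emp (scons om E))) Fb <->
  forall s, is_succ mem s n -> forall x, (x ∈ s <-> x = emp \/ exists m, m ∈ n /\ m ∈ om /\ is_succ mem x m).
Proof. unfold Fb. sat_simp. reflexivity. Qed.

Lemma om_struct n : n ∈ om -> forall x, x ∈ suc n <-> x = emp \/ exists m, m ∈ n /\ m ∈ om /\ x = suc m.
Proof.
  intro Hn.
  assert (H : sat mem (scons n (scons emp (scons om (fun _ => emp)))) Fb).
  2:{ rewrite sat_Fb in H. intro x. rewrite (H (suc n)) by (apply succ_eq; auto).
      setoid_rewrite succ_eq. tauto. }
  revert n Hn. apply om_ind.
  - rewrite sat_Fb. intros s Hs x. apply succ_eq in Hs. subst. rewrite suc_spec. split.
    intros [H|H]; auto. destruct (emp_spec _ H).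
    intros [H|(m&Hm&_)]; auto. destruct (emp_spec _ Hm).
  - intros n Hn IH. rewrite sat_Fb in *. intros s Hs x. apply succ_eq in Hs. subst.
    specialize (IH (suc n) (proj2 (succ_eq _ _) eq_refl)).
    rewrite suc_spec. rewrite IH. split.
    + intros [[H|(m&Hm&Hm2&Hm3)]|H]; auto. right. exists m. rewrite suc_spec. auto.
      right. exists n. split. apply suc_self. split; auto. apply succ_eq; auto.
    + intros [H|(m&Hm&Hm2&Hm3)]; auto. apply suc_spec in Hm. apply succ_eq in Hm3. destruct Hm as [Hm|Hm].
      left. right. exists m. split; auto. split; auto. apply succ_eq; auto.
      right. subst; auto.
Qed.

Lemma om_trans m n : m ∈ n -> n ∈ om -> m ∈ om.
Proof. intros H Hn. assert (H' : m ∈ suc n) by (apply suc_spec; auto).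
  apply (om_struct n Hn) in H'. destruct H' as [->|(k&_&Hk&->)]. apply emp_om. apply om_suc; auto. Qed.



Lemma app_up2 i1 y1 i2 y2 i y : app mem (up (op i1 y1) (op i2 y2)) i y <-> (i = i1 /\ y = y1) \/ (i = i2 /\ y = y2).
Proof. rewrite app_eq, up_spec. split.
  intros [H|H]; apply op_inj in H; tauto.
  intros [[-> ->]|[-> ->]]; auto. Qed.

Lemma suc_emp_spec x : x ∈ suc emp <-> x = emp.
Proof. rewrite suc_spec. split. intros [H|H]; auto. destruct (emp_spec _ H). auto. Qed.

Lemma up_finite a b : finite_set mem (up a b).
Proof.
  destruct (classic (a = b)) as [<-|Hab].
  - exists om, (suc emp), (up (op emp a) (op emp a)). split; [apply om_spec|]. split; [apply om_suc, emp_om|].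
    split; [split|]. intros p Hp. apply up_spec in Hp. exists emp, a. apply opair_eq. tauto.
    intros x y z H1 H2. apply app_up2 in H1, H2. intuition congruence.
    split; [|split]. intro i. rewrite suc_emp_spec. setoid_rewrite app_up2. split. intros ->. eauto.
    intros [y H]; intuition.
    intro y. rewrite up_spec. setoid_rewrite app_up2. split. intros H; exists emp; intuition.
    intros [i H]; intuition.
    intros i i' y H1 H2. apply app_up2 in H1, H2. intuition congruence.
  - exists om, (suc (suc emp)), (up (op emp a) (op (suc emp) b)). split; [apply om_spec|]. split; [apply om_suc, om_suc, emp_om|].
    assert (Hne : emp <> suc emp) by (intro H; symmetry in H; apply suc_ne_emp in H; auto).
    split; [split|]. intros p Hp. apply up_spec in Hp. destruct Hp; [exists emp, a | exists (suc emp), b]; apply opair_eq; auto.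
    intros x y z H1 H2. apply app_up2 in H1, H2. intuition congruence.
    split; [|split]. intro i. rewrite suc_spec, suc_emp_spec. setoid_rewrite app_up2. split. intros [->| ->]; eauto.
    intros [y H]; intuition.
    intro y. rewrite up_spec. setoid_rewrite app_up2. split. intros [H|H]; [exists emp|exists (suc emp)]; intuition.
    intros [i H]; intuition.
    intros i i' y H1 H2. apply app_up2 in H1, H2. intuition congruence.
Qed.

Section WithY.
Variable Y : V.
Hypothesis HY1 : subset mem om Y.
Hypothesis HY2 : forall z, finite_set mem z -> subset mem z Y -> z ∈ Y.

Lemma up_Y a b : a ∈ Y -> b ∈ Y -> up a b ∈ Y.
Proof. intros Ha Hb. apply HY2. apply up_finite. intros x Hx. apply up_spec in Hx. destruct Hx; subst; auto. Qed.
Lemma op_Y a b : a ∈ Y -> b ∈ Y -> op a b ∈ Y.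
Proof. intros. unfold op. auto using up_Y. Qed.
Lemma op_om a b : a ∈ om -> b ∈ om -> op a b ∈ Y.
Proof. intros. auto using op_Y. Qed.
End WithY.


Definition FT0 := FAll (FImp (ftrans 0) (FImp (FMem 2 0) (FMem 1 0))).
Lemma sat_FT0 z X E : sat mem (scons z (scons X E)) FT0 <-> forall s, Defs.transitive mem s -> X ∈ s -> z ∈ s.
Proof. reflexivity. Qed.

Definition FR := fNot (FAll (FImp (ftrans 0) (FImp (fsub 1 0) (FMem 2 0)))).
Lemma sat_FR z X E : sat mem (scons z (scons X E)) FR <-> ~ (forall s, Defs.transitive mem s -> subset mem z s -> X ∈ s).
Proof. reflexivity. Qed.

Definition Fsz := fOr (FMem 0 1) (fEx (fAnd (FMem 0 2) (FAll (FImp (ftrans 0) (FImp (fsub 1 0) (FMem 2 0)))))).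
Lemma sat_Fsz x z E : sat mem (scons x (scons z E)) Fsz <-> x ∈ z \/ exists y, y ∈ z /\ (forall s, Defs.transitive mem s -> subset mem y s -> x ∈ s).
Proof. unfold Fsz. sat_simp. reflexivity. Qed.

Section TC.
Variable X T0 : V.
Hypothesis HT0X : X ∈ T0.
Hypothesis HT0t : Defs.transitive mem T0.
Hypothesis HT0m : forall s z, Defs.transitive mem s -> X ∈ s -> z ∈ T0 -> z ∈ s.

Definition RX z := forall s, Defs.transitive mem s -> subset mem z s -> X ∈ s.

Lemma R_of b : b ∈ T0 -> X ∈ b -> RX X.
Proof. intros Hb HXb s Hs Hsub.
  assert (Ht : Defs.transitive mem (cup s (up X X))).
  { intros a c Hac Hc. apply cup_spec in Hc. apply cup_spec. left. destruct Hc as [Hc|Hc].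
    eapply Hs; eauto. apply sing_spec in Hc. subst. auto. }
  assert (Hb' : b ∈ cup s (up X X)). { apply HT0m; auto. apply cup_spec. right. apply up_l. }
  apply cup_spec in Hb'. destruct Hb' as [Hb'|Hb']. eapply Hs; eauto.
  apply sing_spec in Hb'. subst. destruct (no_self _ HXb). Qed.

Lemma notR : forall z, z ∈ T0 -> ~ RX z.
Proof.
  pose (E := fun _ : nat => X).
  cut (forall z, z ∈ T0 -> sat mem (scons z (scons X E)) FR). intros H z Hz. exact (H z Hz).
  apply (eps_ind FR (scons X E) T0). intros z Hz IH.
  apply sat_FR. intro HR.
  destruct (sep Fsz (scons z E) T0) as [sz Hsz].
  assert (Ht : Defs.transitive mem sz).
  { intros a b Hab Hb. apply Hsz in Hb as [Hb1 Hb2]. apply sat_Fsz in Hb2. apply Hsz. split.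
    { eapply HT0t; eauto. }
    apply sat_Fsz. right. destruct Hb2 as [Hb2|(y&Hy&Hy2)].
    - exists b. split. exact Hb2. intros s Hs Hsub. exact (Hsub a Hab).
    - exists y. split. exact Hy. intros s Hs Hsub. eapply Hs. exact Hab. apply Hy2; auto. }
  assert (Hsub : subset mem z sz).
  { intros x Hx. apply Hsz. split. eapply HT0t; eauto. apply sat_Fsz. auto. }
  specialize (HR sz Ht Hsub). apply Hsz in HR as [_ HR]. apply sat_Fsz in HR.
  destruct HR as [HR|(y&Hy&Hy2)].
  - apply (IH X HR HT0X). eapply R_of; eauto.
  - apply (IH y Hy (HT0t _ _ Hy Hz)). exact Hy2.
Qed.

Lemma noX b : b ∈ T0 -> ~ X ∈ b.
Proof. intros Hb H. apply (notR X HT0X). eapply R_of; eauto. Qed.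
End TC.


Definition chainP (A v : V) n := exists K s c, K ∈ om /\ is_succ mem s K /\ is_func mem c /\
  dom_is mem c (fun a => a ∈ s) /\ app mem c emp n /\ app mem c K v /\
  (forall i x, app mem c i x -> x ∈ om) /\
  (forall i si ci csi, i ∈ K -> is_succ mem si i -> app mem c i ci -> app mem c si csi -> rel mem A ci csi).

Definition FP := fEx (fAnd (fapp 2 1 0) (fEx (fEx (fEx (fAnd (FMem 2 8) (fAnd (fsucc 1 2)
  (fAnd (ffunc 0) (fAnd (fdom 0 1) (fAnd (fapp 0 9 3) (fAnd (fapp 0 2 7)
  (fAnd (FAll (FAll (FImp (fapp 2 1 0) (FMem 0 10))))
   (FAll (FAll (FAll (FAll (FImp (FMem 3 6) (FImp (fsucc 2 3) (FImp (fapp 4 3 1) (FImp (fapp 4 2 0) (fapp 10 1 0)))))))))))))))))))).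
Lemma sat_FP z f A v E : sat mem (scons z (scons f (scons A (scons v (scons om (scons emp E)))))) FP <->
  exists n, app mem f z n /\ chainP A v n.
Proof. unfold FP, chainP. sat_simp. reflexivity. Qed.

Definition Fcp := fOr (fopair 0 3 2) (fEx (fEx (fEx (fAnd (fapp 4 2 1) (fAnd (fsucc 0 2) (fopair 3 0 1)))))).
Lemma sat_Fcp p c j E : sat mem (scons p (scons c (scons j (scons emp E)))) Fcp <->
  is_opair mem p emp j \/ exists i b si, app mem c i b /\ is_succ mem si i /\ is_opair mem p si b.
Proof. unfold Fcp. sat_simp. reflexivity. Qed.

Definition FA := fEx (fEx (fEx (fEx (fAnd (FMem 3 2) (fAnd (fapp 5 3 1) (fAnd (fapp 5 2 0) (fopair 4 1 0))))))).
Lemma sat_FA p f E : sat mem (scons p (scons f E)) FA <->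
  exists a b m n, a ∈ b /\ app mem f a m /\ app mem f b n /\ is_opair mem p m n.
Proof. unfold FA. sat_simp. reflexivity. Qed.

Definition Fwf := fEx (fAnd (fapp 2 1 0) (FMem 0 3)).
Lemma sat_Fwf z f S E : sat mem (scons z (scons f (scons S E))) Fwf <-> exists n, app mem f z n /\ n ∈ S.
Proof. unfold Fwf. sat_simp. reflexivity. Qed.

Definition Fcol := FAll (FAll (FImp (fapp 3 2 1) (FImp (fapp 4 1 0) (FEq 0 2)))).
Lemma sat_Fcol z f g E : sat mem (scons z (scons f (scons g E))) Fcol <-> forall n m, app mem f z n -> app mem g n m -> m = z.
Proof. unfold Fcol. sat_simp. reflexivity. Qed.

Lemma func_uniq c a b b' : is_func mem c -> app mem c a b -> app mem c a b' -> b = b'.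
Proof. intros H. apply H. Qed.

Lemma chain_base A v : v ∈ om -> chainP A v v.
Proof. intro Hv. exists emp, (suc emp), (up (op emp v) (op emp v)).
  assert (Hc : forall i y, app mem (up (op emp v) (op emp v)) i y <-> i = emp /\ y = v).
  { intros i y. rewrite app_up2. tauto. }
  split. apply emp_om. split. apply succ_eq; auto. split. split.
  intros p Hp. apply up_spec in Hp. exists emp, v. apply opair_eq. tauto.
  intros a b b' H1 H2. apply Hc in H1, H2. intuition congruence.
  split. intro a. rewrite suc_emp_spec. setoid_rewrite Hc. split. intros ->; eauto. intros [y Hy]; tauto.
  split. apply Hc; auto. split. apply Hc; auto. split. intros i x Hx. apply Hc in Hx. destruct Hx; subst; auto.
  intros i si ci csi Hi. destruct (emp_spec _ Hi). Qed.

Lemma chainP_chain A v j : chainP A v j -> chain mem A j v.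
Proof. intros (K&s&c&H1&H2&H3&H4&H5&H6&H7&H8). exists om, K, s, c, emp.
  split. apply om_spec. split. auto. split. auto. split. auto. split. auto. split. intro x. apply emp_spec.
  auto. Qed.

Section Build.
Variable X T0 f Y A v : V.
Hypothesis HXne : exists x, x ∈ X.
Hypothesis HT0X : X ∈ T0.
Hypothesis HT0t : Defs.transitive mem T0.
Hypothesis HT0m : forall s z, Defs.transitive mem s -> X ∈ s -> z ∈ T0 -> z ∈ s.
Hypothesis Hf1 : is_func mem f.
Hypothesis Hf2 : dom_is mem f (fun a => a ∈ T0).
Hypothesis Hf3 : forall a b, app mem f a b -> b ∈ om.
Hypothesis Hf4 : inj mem f.
Hypothesis HY1 : subset mem om Y.
Hypothesis HY2 : forall z, finite_set mem z -> subset mem z Y -> z ∈ Y.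
Hypothesis HA : forall p, p ∈ A <-> p ∈ Y /\ exists a b m n, a ∈ b /\ app mem f a m /\ app mem f b n /\ is_opair mem p m n.
Hypothesis Hv : app mem f X v.

Lemma f_T0 a m : app mem f a m -> a ∈ T0.
Proof. intro H. apply Hf2. eauto. Qed.
Lemma f_dom a : a ∈ T0 -> exists m, app mem f a m.
Proof. intro H. apply Hf2. auto. Qed.

Lemma relA j k : rel mem A j k <-> exists a b, a ∈ b /\ app mem f a j /\ app mem f b k.
Proof. rewrite rel_eq, HA. split.
  - intros [_ (a&b&m&n&H1&H2&H3&H4)]. apply opair_eq in H4. apply op_inj in H4 as [-> ->]. eauto.
  - intros (a&b&H1&H2&H3). split. apply op_om; eauto. exists a, b, j, k. repeat split; auto. apply opair_eq; auto.
Qed.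

Lemma fld_f j : in_fld mem A j -> exists z, z ∈ T0 /\ app mem f z j.
Proof. intros [y [H|H]]; apply relA in H as (a&b&H1&H2&H3). exists a; eauto using f_T0. exists b; eauto using f_T0. Qed.

Lemma v_om : v ∈ om.
Proof. eauto. Qed.

Lemma chain_prep j k : j ∈ om -> rel mem A j k -> chainP A v k -> chainP A v j.
Proof.
  intros Hj Hjk (K&s&c&HK&Hs&Hc&Hd&H0&HKv&Hval&Hstep). apply succ_eq in Hs; subst s.
  destruct (sep Fcp (scons c (scons j (scons emp (fun _ => emp)))) Y) as [c' Hc'].
  assert (HsK : suc K ∈ om) by (apply om_suc; auto).
  assert (Hi_om : forall i y, app mem c i y -> i ∈ om).
  { intros i y H. assert (Hi : i ∈ suc K) by (apply Hd; eauto). eapply om_trans; eauto. }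
  assert (key : forall x y, app mem c' x y <-> (x = emp /\ y = j) \/ exists i, x = suc i /\ app mem c i y).
  { intros x y. rewrite app_eq, Hc', sat_Fcp. setoid_rewrite opair_eq. setoid_rewrite succ_eq. split.
    - intros [_ [E|(i&b&si&Hib&->&E)]].
      + apply op_inj in E. auto.
      + apply op_inj in E as [-> ->]. eauto.
    - intros [[-> ->]|(i&->&Hiy)].
      + split. apply op_om; auto using emp_om. auto.
      + split. apply op_om; eauto using om_suc. right. exists i, y, (suc i). auto. }
  exists (suc K), (suc (suc K)), c'.
  split. auto. split. apply succ_eq; auto. split. split.
  - intros p Hp. apply Hc' in Hp as [_ Hp]. apply sat_Fcp in Hp. destruct Hp as [Hp|(i&b&si&_&_&Hp)]; eauto.
  - intros x y y' H1 H2. apply key in H1, H2.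
    destruct H1 as [[-> ->]|(i&->&H1)]; destruct H2 as [[E ->]|(i'&E&H2)]; auto.
    + symmetry in E. destruct (suc_ne_emp _ E).
    + destruct (suc_ne_emp _ E).
    + apply suc_inj in E. subst. eapply func_uniq; eauto.
  - split. intro x. rewrite (om_struct (suc K) HsK). setoid_rewrite key. split.
    + intros [->|(m&Hm&Hm2&->)]. eauto. apply Hd in Hm as [y Hy]. exists y. right. eauto.
    + intros [y [[-> _]|(i&->&Hiy)]]. auto. right. exists i. split. apply Hd. eauto. split; eauto.
    + split. apply key. auto. split. apply key. right. eauto. split.
      * intros i x Hx. apply key in Hx. destruct Hx as [[_ ->]|(i'&_&H)]; eauto.
      * intros i si ci csi Hi Hsi H1 H2. apply succ_eq in Hsi. subst si.
        apply (om_struct K HK) in Hi. destruct Hi as [->|(m&Hm&Hm2&->)].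
        -- apply key in H1, H2. destruct H1 as [[_ ->]|(i'&E&_)]; [|symmetry in E; destruct (suc_ne_emp _ E)].
           destruct H2 as [[E _]|(i'&E&H2)]; [destruct (suc_ne_emp _ E)|]. apply suc_inj in E. subst i'.
           assert (csi = k) by (eapply func_uniq; eauto). subst. auto.
        -- apply key in H1, H2. destruct H1 as [[E _]|(i'&E&H1)]; [destruct (suc_ne_emp _ E)|].
           destruct H2 as [[E' _]|(i''&E'&H2)]; [destruct (suc_ne_emp _ E')|].
           apply suc_inj in E, E'. subst. eapply Hstep; eauto. apply succ_eq; auto.
Qed.



Lemma all_chain : forall z, z ∈ T0 -> forall m, app mem f z m -> chainP A v m.
Proof.
  pose (E := fun _ : nat => emp).
  destruct (sep FP (scons f (scons A (scons v (scons om (scons emp E))))) T0) as [P HP].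
  assert (Ht : Defs.transitive mem P).
  { intros a b Hab Hb. apply HP in Hb as [Hb1 Hb2]. apply sat_FP in Hb2 as (n&Hn&Hc).
    assert (Ha : a ∈ T0) by (eapply HT0t; eauto).
    destruct (f_dom a Ha) as [m Hm].
    apply HP. split; auto. apply sat_FP. exists m. split; auto.
    apply chain_prep with n; eauto. apply relA. eauto. }
  assert (HXP : X ∈ P).
  { apply HP. split; auto. apply sat_FP. exists v. split; auto. apply chain_base. eauto. }
  intros z Hz m Hm. assert (Hz' : z ∈ P) by (apply HT0m; auto).
  apply HP in Hz' as [_ Hz']. apply sat_FP in Hz' as (n&Hn&Hc).
  assert (m = n) by (eapply func_uniq; eauto). subst; auto.
Qed.

Lemma v_fld : in_fld mem A v.
Proof. destruct HXne as [x Hx]. assert (Hx' : x ∈ T0) by (eapply HT0t; eauto).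
  destruct (f_dom x Hx') as [m Hm]. exists m. right. apply relA. eauto. Qed.

Lemma v_ver : is_ver mem A v.
Proof. split. apply v_fld. intros j Hj. apply fld_f in Hj as (z&Hz&Hzj). apply chainP_chain. eapply all_chain; eauto. Qed.

Lemma ver_uniq u : is_ver mem A u -> u = v.
Proof.
  intros [_ Hu]. destruct (Hu v v_fld) as (w&K&s&c&e&Hw&HK&Hs&Hc&Hd&He&H0&HK'&Hstep).
  apply omega_eq in Hw. apply succ_eq in Hs. apply empty_eq in He. subst w s e.
  assert (HKK : K ∈ suc K) by apply suc_self.
  apply (om_struct K HK) in HKK. destruct HKK as [->|(m&Hm&Hm2&->)].
  - eapply func_uniq; eauto.
  - exfalso.
    assert (H0m : emp ∈ suc m) by (apply (om_struct m Hm2); auto).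
    assert (H1 : suc emp ∈ suc (suc m)) by (apply (om_struct (suc m) HK); right; exists emp; auto using emp_om).
    apply Hd in H1 as [y Hy].
    assert (Hr : rel mem A v y) by (eapply Hstep; eauto; apply succ_eq; auto).
    apply relA in Hr as (a&b&Hab&Ha&Hb).
    assert (a = X) by (eapply Hf4; eauto). subst a.
    apply (noX X T0 HT0X HT0t HT0m b); eauto using f_T0.
Qed.

Lemma A_vertex : vertex mem A.
Proof. right. exists v. split. apply v_ver. apply ver_uniq. Qed.

Lemma A_digraph : is_digraph mem A.
Proof. intros p Hp. apply HA in Hp as [_ (a&b&m&n&_&_&_&H)]. eauto. Qed.

Lemma A_sub w : is_omega mem w -> sub_omega2 mem A w.
Proof. intros Hw p Hp. apply omega_eq in Hw. subst w. apply HA in Hp as [_ (a&b&m&n&_&H1&H2&H)]. eauto 7. Qed.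

Lemma A_wf : wf_dg mem A.
Proof.
  intros S [x Hx] HS. pose (E := fun _ : nat => emp).
  destruct (sep Fwf (scons f (scons S E)) T0) as [S' HS'].
  destruct (fld_f x (HS x Hx)) as (z&Hz&Hzx).
  destruct (ax_reg M S') as (z0&Hz0&Hmin).
  { exists z. apply HS'. split; auto. apply sat_Fwf. eauto. }
  apply HS' in Hz0 as [Hz0 Hz0']. apply sat_Fwf in Hz0' as (n&Hn&HnS).
  exists n. split; auto. intros j Hj Hr. apply relA in Hr as (a&b&Hab&Ha&Hb).
  assert (b = z0) by (eapply Hf4; eauto). subst b.
  apply (Hmin a Hab). apply HS'. split. eauto using f_T0. apply sat_Fwf. eauto.
Qed.

Lemma A_ext : ext_dg mem A.
Proof.
  intros u w Hu Hw H. apply fld_f in Hu as (zu&Hzu&Hu). apply fld_f in Hw as (zw&Hzw&Hw).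
  assert (zu = zw).
  { apply ext. intro y. split; intro Hy.
    - assert (HyT : y ∈ T0) by (eapply HT0t; eauto). destruct (f_dom y HyT) as [k Hk].
      assert (Hr : rel mem A k w) by (apply H; apply relA; eauto).
      apply relA in Hr as (a&b&Hab&Ha&Hb). assert (a = y) by (eapply Hf4; eauto).
      assert (b = zw) by (eapply Hf4; eauto). subst; auto.
    - assert (HyT : y ∈ T0) by (eapply HT0t; eauto). destruct (f_dom y HyT) as [k Hk].
      assert (Hr : rel mem A k u) by (apply H; apply relA; eauto).
      apply relA in Hr as (a&b&Hab&Ha&Hb). assert (a = y) by (eapply Hf4; eauto).
      assert (b = zu) by (eapply Hf4; eauto). subst; auto. }
  subst. eapply func_uniq; eauto.
Qed.

Section Collapse.
Variable X' g : V.
Hypothesis HX't : Defs.transitive mem X'.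
Hypothesis Hg : iso_onto mem g A X'.

Lemma collapse_v : app mem g v X.
Proof.
  destruct Hg as (Hg1&Hg2&Hg3&Hg4&Hg5).
  pose (E := fun _ : nat => emp).
  assert (Hind : forall z, z ∈ T0 -> sat mem (scons z (scons f (scons g E))) Fcol).
  { apply eps_ind. intros z Hz IH. apply sat_Fcol. intros n m Hn Hm.
    assert (IH' : forall y, y ∈ z -> forall k y', app mem f y k -> app mem g k y' -> y' = y).
    { intros y Hy. assert (HyT : y ∈ T0) by (eapply HT0t; eauto). apply (sat_Fcol y f g E). auto. }
    apply ext. intro y. split; intro Hy.
    - assert (HmX : m ∈ X') by (apply Hg3; eauto).
      assert (HyX : y ∈ X') by (eapply HX't; eauto).
      apply Hg3 in HyX as [k Hk].
      assert (Hr : rel mem A k n) by (eapply Hg5; eauto).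
      apply relA in Hr as (a&b&Hab&Ha&Hb). assert (b = z) by (eapply Hf4; eauto). subst b.
      assert (y = a) by (eapply IH'; eauto). subst; auto.
    - assert (HyT : y ∈ T0) by (eapply HT0t; eauto). destruct (f_dom y HyT) as [k Hk].
      assert (Hr : rel mem A k n) by (apply relA; eauto).
      assert (Hkf : in_fld mem A k) by (exists n; auto).
      apply Hg2 in Hkf as [y' Hy'].
      assert (y' = y) by (eapply IH'; eauto). subst y'.
      eapply Hg5; eauto. }
  destruct (proj1 (Hg2 v) v_fld) as [X0 HX0].
  assert (X0 = X) by (apply (proj1 (sat_Fcol X f g E) (Hind X HT0X)) with v; auto).
  subst; auto.
Qed.
End Collapse.

Lemma build_all : (forall w, is_omega mem w -> sub_omega2 mem A w) /\ is_digraph mem A /\ wf_dg mem A /\ ext_dg mem A /\ vertex mem A /\ denotes mem A X.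
Proof.
  split. apply A_sub. split. apply A_digraph. split. apply A_wf. split. apply A_ext. split. apply A_vertex.
  right. destruct (ax_MC M A A_digraph A_wf A_ext) as (X'&g&HX'&Hg).
  exists v, g. split. apply v_ver. split. exists X'; auto. apply (collapse_v X' g HX' Hg).
Qed.
End Build.
End Main.




Theorem lemma8p4 (M : ZFTM) (X : zV M) :
  exists A : zV M,
    (forall w, is_omega (zmem M) w -> sub_omega2 (zmem M) A w) /\
    is_digraph (zmem M) A /\ wf_dg (zmem M) A /\ ext_dg (zmem M) A /\
    vertex (zmem M) A /\ denotes (zmem M) A X.
Proof.
  destruct (classic (exists x, zmem M x X)) as [HXne|HXe].
  - destruct (ax_TS M (up M X X)) as (t&Ht&Hsub).
    assert (HXt : zmem M X t) by (apply Hsub; apply up_l).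
    destruct (sep M FT0 (scons X (fun _ => X)) t) as [T0 HT0].
    assert (HT0X : zmem M X T0) by (apply HT0; split; auto; apply sat_FT0; auto).
    assert (HT0t : Defs.transitive (zmem M) T0).
    { intros a b Hab Hb. apply HT0 in Hb as [Hb1 Hb2]. apply HT0. split. eapply Ht; eauto.
      apply sat_FT0. intros s Hs HXs. eapply Hs; eauto. apply (proj1 (sat_FT0 M _ _ _) Hb2); auto. }
    assert (HT0m : forall s z, Defs.transitive (zmem M) s -> zmem M X s -> zmem M z T0 -> zmem M z s).
    { intros s z Hs HXs Hz. apply HT0 in Hz as [_ Hz]. apply (proj1 (sat_FT0 M _ _ _) Hz); auto. }
    destruct (ax_count M T0) as (w&f&Hw&Hf1&Hf2&Hf3&Hf4). apply omega_eq in Hw. subst w.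
    destruct (ax_FC M (om M)) as (Y&HY1&HY2).
    destruct (sep M FA (scons f (fun _ => f)) Y) as [A HA0].
    assert (HA : forall p, zmem M p A <-> zmem M p Y /\ exists a b m n, zmem M a b /\ app (zmem M) f a m /\
        app (zmem M) f b n /\ is_opair (zmem M) p m n).
    { intro p. rewrite HA0, sat_FA. reflexivity. }
    destruct (proj1 (Hf2 X) HT0X) as [v Hv].
    exists A. eapply (build_all M X T0 f Y A v); eauto.
  - exists (emp M). split. intros w _ p Hp. destruct (emp_spec M p Hp).
    split. intros p Hp. destruct (emp_spec M p Hp).
    split. intros S [x Hx] HS. destruct (HS x Hx) as [y [H|H]]; apply rel_eq in H; destruct (emp_spec M _ H).
    split. intros u w [y [H|H]]; apply rel_eq in H; destruct (emp_spec M _ H).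
    split. left. intro x. apply emp_spec.
    left. split. intro x. apply emp_spec. intros x Hx. apply HXe. eauto.
Qed.
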